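(* Let $K$ be an (unknown) positive integer, let $0<\mu<1$, and let $\lambda\ge\max\left(\frac{2^{56}}{\mu^2},\ \sqrt[5]{\frac{48}{\mu}\ln K}\right)$. Let $(p,q,\omega)$ be a triple produced by the algorithm described below on input $\lambda$. Then the probability that $q$ divides $K$ is at most $\mu$.
   Context: The algorithm, given $\lambda$ and a failure parameter $\epsilon\in(0,1)$ with $\lambda\ge 2^{58}/\epsilon^2$, proceeds as follows (primality being tested by a deterministic polynomial-time primality test): (1) sample at most $\frac{5}{6}\ln\frac{4}{\epsilon}\ln\lambda$ independent uniformly random odd integers $p\in(\lambda,2\lambda)$ until one is prime; return \textsc{fail} if none is prime. (2) Sample at most $12\ln\frac{4}{\epsilon}\ln\lambda$ independent uniformly random even integers $a\in[1,\lambda^5]$ until $q=ap+1$ is prime; return \textsc{fail} if none gives a prime. (3) Sample at most $\log_p\frac{4}{\epsilon}$ independent uniformly random elements $\zeta\in\mathbb{F}_q^\times$ until $\omega=\zeta^{(q-1)/p}\ne 1$; return \textsc{fail} if $\omega=1$ for every sampled $\zeta$. (4) Return $(p,q,\omega)$. With probability at least $1-\epsilon$ this returns a triple in which $p$ is a uniformly random prime in $(\lambda,2\lambda)$, $q\le\lambda^6$ is a prime with $p\mid q-1$, and $\omega$ is a primitive $p$-th root of unity in $\mathbb{F}_q$. *)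

(* Defs.v *)
From HB Require Import structures.
From mathcomp Require Import all_boot all_order all_algebra.
From mathcomp Require Import all_classical all_reals.
From mathcomp Require Import exp.
Set Implicit Arguments. Unset Strict Implicit. Unset Printing Implicit Defensive.
Import Order.TTheory GRing.Theory Num.Theory.
Local Open Scope ring_scope.

(* Finitely supported (sub)probability distributions with weights in R:
   a list of (weight, outcome) pairs. *)
Section Dist.
Variable R : realType.

Definition dist (T : Type) := seq (R * T).

Definition dret (T : Type) (x : T) : dist T := [:: (1, x)].

Definition dbind (T U : Type) (d : dist T) (f : T -> dist U) : dist U :=
  flatten [seq [seq (w.1 * v.1, v.2) | v <- f w.2] | w <- d].

Definition duniform (T : Type) (s : seq T) : dist T :=
  [seq ((size s)%:R^-1, x) | x <- s].

Definition dprob (T : Type) (d : dist T) (E : T -> bool) : R :=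
  \sum_(w <- d) w.1 * (E w.2)%:R.

Fixpoint retry (T : Type) (n : nat) (d : dist (option T)) : dist (option T) :=
  match n with
  | 0 => dret None
  | n'.+1 => dbind d (fun o => match o with
                              | Some x => dret (Some x)
                              | None => retry n' d
                              end)
  end.

(* "at most x samples" = floor x samples *)
Definition nb_tries (x : R) : nat := Num.truncn x.

(* The odd integers p with lam < p < 2 lam. *)
Definition odd_range (lam : nat) : seq nat :=
  [seq n <- iota lam.+1 lam.-1 | odd n].

Definition even_range (lam : nat) : seq nat :=
  [seq a <- iota 1 (lam ^ 5) | ~~ odd a].

(* F_q^x for prime q, represented as the residues 1 .. q-1 (arithmetic mod q). *)
Definition Fq_units (q : nat) : seq nat := iota 1 q.-1.

(* The algorithm, on input lam and failure parameter eps.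
   Output: None = FAIL, Some (p, q, omega) otherwise, where omega is the
   residue mod q representing zeta^((q-1)/p) in F_q. *)
Definition step1 (lam : nat) (eps : R) : dist (option nat) :=
  retry (nb_tries (5%:R / 6%:R * ln (4 / eps) * ln lam%:R))
    (dbind (duniform (odd_range lam))
       (fun p => dret (if prime p then Some p else None))).

Definition step2 (lam : nat) (eps : R) (p : nat) : dist (option nat) :=
  retry (nb_tries (12%:R * ln (4 / eps) * ln lam%:R))
    (dbind (duniform (even_range lam))
       (fun a => dret (if prime (a * p + 1) then Some (a * p + 1)%N else None))).

Definition step3 (eps : R) (p q : nat) : dist (option nat) :=
  retry (nb_tries (ln (4 / eps) / ln p%:R))
    (dbind (duniform (Fq_units q))
       (fun zeta => let omega := ((zeta ^ ((q - 1) %/ p)) %% q)%N in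
                    dret (if omega != 1%N then Some omega else None))).

Definition algorithm (lam : nat) (eps : R) : dist (option (nat * nat * nat)) :=
  dbind (step1 lam eps) (fun op =>
  match op with
  | None => dret None
  | Some p =>
    dbind (step2 lam eps p) (fun oq =>
    match oq with
    | None => dret None
    | Some q =>
      dbind (step3 eps p q) (fun ow =>
      match ow with
      | None => dret None
      | Some omega => dret (Some (p, q, omega))
      end)
    end)
  end).

End Dist.

(* Main.v *)
Require Import Defs.
From HB Require Import structures.
From mathcomp Require Import all_boot all_order all_algebra.
From mathcomp Require Import all_classical all_reals.
From mathcomp Require Import exp.
From mathcomp Require Import ring lra zify.
Import Order.TTheory GRing.Theory Num.Theory.
Set Implicit Arguments. Unset Strict Implicit. Unset Printing Implicit Defensive.

Lemma count_odd_iota n : forall m,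
  n <= (count odd (iota m n)).*2.+1 /\ n <= (count (fun x => ~~ odd x) (iota m n)).*2.+1.
Proof.
suff H : (forall m, n <= (count odd (iota m n)).*2.+1 /\
                   n <= (count (fun x => ~~ odd x) (iota m n)).*2.+1) /\
   (forall m, n.+1 <= (count odd (iota m n.+1)).*2.+1 /\
                   n.+1 <= (count (fun x => ~~ odd x) (iota m n.+1)).*2.+1).
  by case: H.
elim: n => [|n [IH1 IH2]].
  split=> m /=; first by [].
  by case: (odd m).
split; first exact: IH2.
move=> m; rewrite [iota _ _]/= [iota _ _]/=.
case: (IH1 m.+2) => A B.
rewrite /=; case: (odd m) => /=; rewrite ?addn0 ?add0n ?add1n /=; lia.
Qed.

Lemma not_dvd_prod x s : prime x -> all prime s -> x \notin s -> ~~ (x %| \prod_(p <- s) p).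
Proof.
move=> px; elim: s => [|y s IH] /=; first by rewrite big_nil dvdn1; case: x px => [|[]].
move=> /andP[py ps]; rewrite in_cons negb_or => /andP[xy xs].
rewrite big_cons Euclid_dvdM // dvdn_prime2 // negb_or xy /=; exact: IH.
Qed.

Lemma prod_dvd s n : uniq s -> all prime s -> all (fun p => p %| n) s ->
  \prod_(p <- s) p %| n.
Proof.
elim: s => [|x s IH] /=; first by rewrite big_nil dvd1n.
move=> /andP[xs us] /andP[px ps] /andP[xn sn].
rewrite big_cons Gauss_dvd ?xn ?IH //= prime_coprime //; exact: not_dvd_prod.
Qed.

Lemma pow_le_prod l s : (forall p, p \in s -> l < p) -> l.+1 ^ size s <= \prod_(p <- s) p.
Proof.
elim: s => [|x s IH] H /=; first by rewrite big_nil.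
rewrite big_cons expnS leq_mul //; first by apply: H; rewrite mem_head.
by apply: IH => p ps; apply: H; rewrite in_cons ps orbT.
Qed.

Lemma pow_le_count l n s : 0 < n -> uniq s ->
  (forall p, p \in s -> [&& prime p, p %| n & l < p]) -> l.+1 ^ size s <= n.
Proof.
move=> n0 us H; apply: (leq_trans (pow_le_prod (l:=l) _)).
  by move=> p /H /and3P[].
apply: dvdn_leq => //; apply: prod_dvd => //; apply/allP => p /H /and3P[] //.
Qed.

Lemma count_mem_sum (T : eqType) (U : Type) (f : U -> T) (L : seq T) (s : seq U) :
  count (fun a => f a \in L) s <= \sum_(r <- L) count (fun a => r == f a) s.
Proof.
elim: L => [|r L IH].
  by rewrite big_nil leqn0 -/(count pred0 s) count_pred0.
rewrite big_cons.
apply: (@leq_trans (count (predU (fun a => r == f a) (fun a => f a \in L)) s)).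
  by apply: sub_count => a /=; rewrite in_cons eq_sym.
rewrite -(leq_add2r (count (predI (fun a => r == f a) (fun a => f a \in L)) s)).
rewrite count_predUI -addnA leq_add2l; apply: (leq_trans IH); exact: leq_addr.
Qed.

Lemma count_le1 (T : eqType) (P : pred T) (s : seq T) :
  uniq s -> (forall x y, x \in s -> y \in s -> P x -> P y -> x = y) -> count P s <= 1.
Proof.
move=> us H; case Hh: (has P s); last by rewrite has_count in Hh; case: (count P s) Hh.
case/hasP: Hh => a aS Pa.
rewrite -size_filter; apply: (@leq_trans (size [:: a])) => //.
apply: uniq_leq_size; first exact: filter_uniq.
move=> b; rewrite mem_filter => /andP[Pb bS]; rewrite inE; apply/eqP; exact: H.
Qed.

Definition bigB (lam K : nat) := [seq r <- iota 0 K.+1 | prime r && (r %| K) && (lam < r)].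

Lemma mem_odd_range lam p : p \in odd_range lam -> lam < p < lam.*2.
Proof. rewrite mem_filter mem_iota => /andP[_ /andP[h1 h2]]; lia. Qed.

Lemma mem_even_range lam a : a \in even_range lam -> 0 < a <= lam ^ 5.
Proof. rewrite mem_filter mem_iota => /andP[_ /andP[h1 h2]]; lia. Qed.

Lemma per_rp lam r p : lam < p < lam.*2 ->
  count (fun a => r == a * p + 1) (even_range lam) <=
  [&& p %| r.-1, 0 < r.-1 & r.-1 < lam.*2 * lam ^ 5].
Proof.
move=> /andP[h1 h2].
case Hh: (has (fun a => r == a * p + 1) (even_range lam)); last first.
  by rewrite has_count in Hh; case: (count _ _) Hh.
case/hasP: (Hh) => a aS /eqP ra.
have [a0 aL] := andP (mem_even_range aS).
have -> : [&& p %| r.-1, 0 < r.-1 & r.-1 < lam.*2 * lam ^ 5].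
  rewrite ra addn1 /= dvdn_mull // muln_gt0 a0 /=.
  apply/andP; split; first lia.
  move: aL; set L := lam ^ 5 => aL; nia.
apply: count_le1; first by apply: filter_uniq; exact: iota_uniq.
move=> x y _ _ /eqP -> /eqP; rewrite !addn1 => -[] /eqP.
rewrite eqn_pmul2r; [by move/eqP|lia].
Qed.

Lemma per_r lam r : 1 < lam ->
  \sum_(p <- odd_range lam | prime p) count (fun a => r == a * p + 1) (even_range lam) <= 6.
Proof.
move=> l1.
apply: (@leq_trans (\sum_(p <- odd_range lam | prime p)
     [&& p %| r.-1, 0 < r.-1 & r.-1 < lam.*2 * lam ^ 5])).
  rewrite big_seq_cond [X in _ <= X]big_seq_cond; apply: leq_sum => p /andP[pS _].
  exact: per_rp (mem_odd_range pS).
have -> : \sum_(p <- odd_range lam | prime p)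
     [&& p %| r.-1, 0 < r.-1 & r.-1 < lam.*2 * lam ^ 5] =
  count (fun p => prime p && [&& p %| r.-1, 0 < r.-1 & r.-1 < lam.*2 * lam ^ 5]) (odd_range lam).
  rewrite -sum1_count big_mkcondr /=; apply: eq_bigr => p _; by case: ifP.
case Hr: (0 < r.-1 < lam.*2 * lam ^ 5); last first.
  rewrite (@eq_count _ _ pred0) ?count_pred0 // => p /=.
  by rewrite !andbF.
case/andP: Hr => r0 rL.
set S := [seq p <- odd_range lam | prime p && (p %| r.-1)].
have -> : count (fun p => prime p && [&& p %| r.-1, true & true]) (odd_range lam) = size S.
  by rewrite size_filter; apply: eq_count => p; rewrite !andbT.
have H7 := @pow_le_count lam r.-1 S r0 (filter_uniq _ (filter_uniq _ (iota_uniq _ _))).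
have : lam.+1 ^ size S <= r.-1.
  apply: H7 => p; rewrite mem_filter => /andP[/andP[pp pd] pS].
  by rewrite pp pd; case/andP: (mem_odd_range pS).
move=> HS; rewrite leqNgt; apply/negP => S7.
have : lam.+1 ^ 7 <= lam.*2 * lam ^ 5.
  apply: leq_trans (ltnW rL); apply: leq_trans HS; apply: leq_pexp2l => //.
rewrite (expnS _ 6) (_ : 6 = 1 + 5)%N // expnD expn1 => H.
have A : lam.*2 < lam.+1 * lam.+1 by nia.
have B : lam ^ 5 <= lam.+1 ^ 5 by rewrite leq_exp2r.
have C : 0 < lam ^ 5 by rewrite expn_gt0; lia.
move: H A B C; set X := lam ^ 5; set Y := lam.+1 ^ 5; nia.
Qed.

Lemma count_main lam K : 1 < lam -> 0 < K ->
  \sum_(p <- odd_range lam | prime p)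
     count (fun a => prime (a * p + 1) && (a * p + 1 %| K)) (even_range lam)
  <= 6 * size (bigB lam K).
Proof.
move=> l1 K0.
apply: (@leq_trans (\sum_(p <- odd_range lam | prime p)
   \sum_(r <- bigB lam K) count (fun a => r == a * p + 1) (even_range lam))).
  rewrite big_seq_cond [X in _ <= X]big_seq_cond; apply: leq_sum => p /andP[pS _].
  have [lp _] := andP (mem_odd_range pS).
  apply: leq_trans (count_mem_sum (fun a => a * p + 1) _ _).
  apply: sub_count => a /= /andP[pa da].
  have h1 : a * p + 1 <= K := dvdn_leq K0 da.
  have h2 : lam < a * p + 1 by case: a pa da {h1} => [|a'] //= _ _; nia.
  rewrite mem_filter mem_iota pa da h2 /=; lia.
rewrite exchange_big /=.
apply: (@leq_trans (\sum_(r <- bigB lam K) 6)).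
  by apply: leq_sum => r _; exact: per_r.
by rewrite big_const_seq count_predT iter_addn_0 mulnC.
Qed.

Lemma bigB_bound lam K : 0 < K -> lam.+1 ^ size (bigB lam K) <= K.
Proof.
move=> K0; apply: pow_le_count => //.
  by apply: filter_uniq; exact: iota_uniq.
by move=> p; rewrite mem_filter => /andP[/andP[/andP[-> ->] ->] _].
Qed.

Lemma size_odd_range lam : (lam <= size (odd_range lam) * 2 + 2)%N.
Proof.
have [H _] := count_odd_iota lam.-1 lam.+1.
rewrite /odd_range size_filter; move: H; rewrite -muln2.
set c := count _ _; lia.
Qed.

Lemma size_even_range lam : (lam ^ 5 <= size (even_range lam) * 2 + 1)%N.
Proof.
have [_ H] := count_odd_iota (lam ^ 5) 1.
rewrite /even_range size_filter; move: H; rewrite -muln2.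
set c := count _ _; set L := lam ^ 5; lia.
Qed.

Local Open Scope ring_scope.

Section DistLemmas.
Variable R : realType.

Definition dexp (T : Type) (d : dist R T) (f : T -> R) : R :=
  \sum_(w <- d) w.1 * f w.2.

Definition nonneg (T : Type) (d : dist R T) := all (fun w => 0 <= w.1) d.
Definition good (T : Type) (d : dist R T) :=
  nonneg d /\ dexp d (fun _ => 1) <= 1.

Lemma dexp_bind (T U : Type) (d : dist R T) (f : T -> dist R U) g :
  dexp (dbind d f) g = dexp d (fun x => dexp (f x) g).
Proof.
rewrite /dexp /dbind big_flatten big_map /=; apply: eq_bigr => w _.
rewrite big_map mulr_sumr; apply: eq_bigr => v _ /=; by rewrite mulrA.
Qed.

Lemma dexp_ret (T : Type) (x : T) f : dexp (dret R x) f = f x.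
Proof. by rewrite /dexp /dret big_cons big_nil /= mul1r addr0. Qed.

Lemma dexp_uniform (T : Type) (s : seq T) f :
  dexp (duniform R s) f = (size s)%:R^-1 * \sum_(x <- s) f x.
Proof. by rewrite /dexp /duniform big_map mulr_sumr. Qed.

Lemma dexp_le (T : Type) (d : dist R T) f g :
  nonneg d -> (forall x, f x <= g x) -> dexp d f <= dexp d g.
Proof.
move=> nn fg; elim: d nn => [|w d IH] /=; first by rewrite /dexp !big_nil.
move=> /andP[w0 nd]; rewrite /dexp !big_cons; apply: lerD; last exact: IH.
exact: ler_wpM2l.
Qed.

Lemma dexp_ge0 (T : Type) (d : dist R T) f :
  nonneg d -> (forall x, 0 <= f x) -> 0 <= dexp d f.
Proof.
move=> nn f0; elim: d nn => [|w d IH] /=; first by rewrite /dexp !big_nil.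
move=> /andP[w0 nd]; rewrite /dexp !big_cons; apply: addr_ge0; last exact: IH.
exact: mulr_ge0.
Qed.

Lemma dexpD (T : Type) (d : dist R T) f g :
  dexp d (fun x => f x + g x) = dexp d f + dexp d g.
Proof. by rewrite /dexp -big_split /=; apply: eq_bigr => w _; rewrite mulrDr. Qed.

Lemma dexpZ (T : Type) (d : dist R T) c f :
  dexp d (fun x => c * f x) = c * dexp d f.
Proof. by rewrite /dexp mulr_sumr; apply: eq_bigr => w _; rewrite mulrCA. Qed.

Lemma dexp_cst_le (T : Type) (d : dist R T) c :
  good d -> 0 <= c -> dexp d (fun _ => c) <= c.
Proof.
move=> [nn m1] c0.
have -> : dexp d (fun _ => c) = c * dexp d (fun _ => 1).
  by rewrite -dexpZ; apply: eq_bigr => w _; rewrite mulr1.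
by rewrite -[X in _ <= X]mulr1; apply: ler_wpM2l.
Qed.

Lemma good_ret (T : Type) (x : T) : good (dret R x).
Proof. by split; rewrite ?dexp_ret //= /nonneg /= ler01. Qed.

Lemma nonneg_bind (T U : Type) (d : dist R T) (f : T -> dist R U) :
  nonneg d -> (forall x, nonneg (f x)) -> nonneg (dbind d f).
Proof.
elim: d => [//|w d IH] /= /andP[w0 nd] nf.
rewrite /dbind map_cons /= /nonneg all_cat; apply/andP; split; last exact: IH.
rewrite all_map; move: (nf w.2); elim: (f w.2) => [//|v l IHl] /= /andP[v0 nl].
by rewrite mulr_ge0 // IHl.
Qed.

Lemma good_bind (T U : Type) (d : dist R T) (f : T -> dist R U) :
  good d -> (forall x, good (f x)) -> good (dbind d f).
Proof.
move=> [nd md] gf; split.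
  by apply: nonneg_bind => // x; case: (gf x).
rewrite dexp_bind; apply: le_trans md; apply: dexp_le => // x.
by case: (gf x).
Qed.

Lemma good_uniform (T : Type) (s : seq T) : good (duniform R s).
Proof.
split.
  rewrite /nonneg /duniform all_map.
have c0 : 0 <= (size s)%:R^-1 :> R by rewrite invr_ge0 ler0n.
move: c0; elim: s (size s)%:R^-1 => [//|x l IHl] c c0 /=.
by rewrite c0 IHl.
rewrite dexp_uniform.
have -> : \sum_(x <- s) (1 : R) = (size s)%:R.
  by rewrite -sum1_size natr_sum.
case: (size s) => [|n]; first by rewrite mulr0 ler01.
by rewrite mulVf // pnatr_eq0.
Qed.

Definition oget (T : Type) (g : T -> R) (o : option T) : R :=
  match o with Some x => g x | None => 0 end.

Lemma good_retry (T : Type) n (d : dist R (option T)) : good d -> good (retry n d).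
Proof.
move=> gd; elim: n => [|n IH] /=; first exact: good_ret.
by apply: good_bind => // -[x|]; [exact: good_ret|].
Qed.

Lemma retry_bound (T : Type) n (d : dist R (option T)) (g : T -> R) :
  good d -> (forall x, 0 <= g x) ->
  dexp (retry n d) (oget g) <= n%:R * dexp d (oget g).
Proof.
move=> gd g0; have G0 : forall o, 0 <= oget g o by case.
have E0 : 0 <= dexp d (oget g) by apply: dexp_ge0 => //; case: gd.
elim: n => [|n IH] /=; first by rewrite dexp_ret mul0r.
rewrite dexp_bind.
apply: (@le_trans _ _ (dexp d (fun o => oget g o + n%:R * dexp d (oget g)))).
  apply: dexp_le; first by case: gd.
  case=> [x|] /=; first by rewrite dexp_ret /= lerDl mulr_ge0.
  by rewrite add0r.
rewrite dexpD mulrSr mulrDl mul1r addrC lerD2r; apply: dexp_cst_le => //.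
by rewrite mulr_ge0.
Qed.

End DistLemmas.

Lemma count_natr (R : realType) (T : Type) (P : pred T) (s : seq T) :
  (count P s)%:R = \sum_(x <- s) (P x)%:R :> R.
Proof.
rewrite -sum1_count big_mkcond natr_sum; apply: eq_bigr => x _; by case: (P x).
Qed.

Lemma alg_bound (R : realType) (K lam : nat) (eps : R) :
  dprob (algorithm lam eps)
    (fun o => match o with
              | Some (p, q, omega) => (q %| K)%N
              | None => false
              end) <=
  (nb_tries (5%:R / 6%:R * ln (4 / eps) * ln lam%:R))%:R *
  ((size (odd_range lam))%:R^-1 *
   ((nb_tries (12%:R * ln (4 / eps) * ln lam%:R))%:R *
    ((size (even_range lam))%:R^-1 *
     (\sum_(p <- odd_range lam | prime p)
        count (fun a => prime (a * p + 1) && (a * p + 1 %| K)%N) (even_range lam))%:R))).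
Proof.
set n2 := nb_tries (12%:R * ln (4 / eps) * ln lam%:R).
set c := fun p => count (fun a => prime (a * p + 1) && (a * p + 1 %| K)%N) (even_range lam).
set h := fun p : nat => n2%:R * ((size (even_range lam))%:R^-1 * (c p)%:R) : R.
have g1 : good (step1 lam eps).
  by apply: good_retry; apply: good_bind => [|x]; [exact: good_uniform|exact: good_ret].
have g2 : forall p, good (step2 lam eps p).
  by move=> p; apply: good_retry; apply: good_bind => [|x]; [exact: good_uniform|exact: good_ret].
have g3 : forall p q, good (step3 eps p q).
  by move=> p q; apply: good_retry; apply: good_bind => [|x]; [exact: good_uniform|exact: good_ret].
have -> : forall T (d : dist R T) E, dprob d E = dexp d (fun x => (E x)%:R) by [].
rewrite /algorithm dexp_bind.
apply: (@le_trans _ _ (dexp (step1 lam eps) (oget h))).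
  apply: dexp_le; first by case: g1.
  case=> [p|] /=; last by rewrite dexp_ret.
  rewrite dexp_bind.
  apply: (@le_trans _ _ (dexp (step2 lam eps p) (oget (fun q => (q %| K)%:R)))).
    apply: dexp_le; first by case: (g2 p).
    case=> [q|] /=; last by rewrite dexp_ret.
    rewrite dexp_bind.
    apply: le_trans; last apply: (dexp_cst_le (g3 p q) (ler0n _ (q %| K)%N)).
    apply: dexp_le; first by case: (g3 p q).
    by case=> [w|] /=; rewrite dexp_ret.
  apply: le_trans; first apply: retry_bound.
  - by apply: good_bind => [|x]; [exact: good_uniform|exact: good_ret].
  - by move=> x; exact: ler0n.
  rewrite /h; apply: ler_wpM2l => //.
  rewrite dexp_bind dexp_uniform /c count_natr.
  rewrite le_eqVlt; apply/orP; left; apply/eqP; congr (_ * _).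
  elim: (even_range lam) => [|a l IHl]; first by rewrite !big_nil.
  by rewrite !big_cons IHl dexp_ret; case: ifP.
apply: le_trans; first apply: retry_bound.
- by apply: good_bind => [|x]; [exact: good_uniform|exact: good_ret].
- by move=> x; rewrite /h mulr_ge0 // mulr_ge0 // invr_ge0.
apply: ler_wpM2l => //.
rewrite dexp_bind dexp_uniform; rewrite le_eqVlt; apply/orP; left; apply/eqP; congr (_ * _).
rewrite natr_sum mulr_sumr mulr_sumr big_mkcond /=.
elim: (odd_range lam) => [|a l IHl]; first by rewrite !big_nil.
by rewrite !big_cons IHl dexp_ret; case: ifP => //= _; rewrite add0r.
Qed.

Unset Implicit Arguments.

Theorem theorem2 (R : realType) (K lam : nat) (mu eps : R) :
  (0 < K)%N ->
  0 < mu < 1 ->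
  0 < eps < 1 ->
  2 ^+ 58 / eps ^+ 2 <= lam%:R ->
  lam%:R >= Num.max (2 ^+ 56 / mu ^+ 2) ((48 / mu * ln K%:R) `^ (5%:R^-1)) ->
  dprob (algorithm lam eps)
    (fun o => match o with
              | Some (p, q, omega) => (q %| K)%N
              | None => false
              end) <= mu.
Proof.
move=> K0 /andP[mu0 mu1] /andP[e0 e1] Hl Hm.
have Hm2 : (48 / mu * ln K%:R) `^ (5%:R^-1) <= lam%:R.
  by move: Hm; rewrite ge_max => /andP[].
set x := lam%:R : R.
have e2 : eps ^+ 2 <= 1 by rewrite expr_le1 // ltW.
have e20 : 0 < eps ^+ 2 by rewrite exprn_gt0.
have x58 : 2 ^+ 58 <= x.
  apply: le_trans Hl; rewrite ler_pdivlMr // ler_piMr // exprn_ge0 //.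
have h58 : 1 < 2 ^+ 58 :> R by rewrite exprn_egt1 // ltr1n.
have x1 : 1 < x by apply: lt_le_trans x58.
have x0 : 0 < x by lra.
have l1 : (1 < lam)%N by rewrite -(ltr_nat R).
set L := ln (4 / eps).
set l := ln x.
have L0 : 0 <= L by apply: ln_ge0; rewrite ler_pdivlMr // mul1r; lra.
have L2 : 2 * L <= l.
  have y0 : 0 < 4 / eps by rewrite divr_gt0.
  rewrite /L /l mulr_natl -lnXn // ler_ln ?posrE ?exprn_gt0 //.
  apply: le_trans Hl; rewrite expr_div_n ler_pM2r ?invr_gt0 //.
  have -> : (4:R) ^+ 2 = 2 ^+ 4 by rewrite !exprS expr0; lra.
  by rewrite ler_eXn2l // ltr1n.
have l0 : 0 <= l by apply: ln_ge0; lra.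
set n1 := nb_tries (5%:R / 6%:R * L * l).
set n2 := nb_tries (12%:R * L * l).
have n1b : (n1%:R : R) <= 5%:R / 6%:R * L * l.
  by rewrite /n1 /nb_tries truncn_le; apply: mulr_ge0 => //; apply: mulr_ge0 => //; lra.
have n2b : (n2%:R : R) <= 12%:R * L * l.
  by rewrite /n2 /nb_tries truncn_le !mulr_ge0.
set m := size (bigB lam K).
have mb : m%:R * l <= ln K%:R.
  have := bigB_bound lam K0; rewrite -(ler_nat R) natrX => H.
  have H1 : 0 < lam.+1%:R :> R by rewrite ltr0n.
  have H2 : m%:R * ln (lam.+1%:R) <= ln K%:R :> R.
    by rewrite mulr_natl -lnXn // ler_ln ?posrE ?exprn_gt0 ?ltr0n.
  apply: le_trans H2; apply: ler_wpM2l => //.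
  have Hs : x <= lam.+1%:R by rewrite /x mulrSr lerDl.
  by rewrite ler_ln // posrE ltr0n.
set y := 48 / mu * ln K%:R.
have y0 : 0 <= y by rewrite mulr_ge0 ?divr_ge0 ?ln_ge0 ?ler1n //; lra.
have yx : y <= x ^+ 5.
  have := lerXn2r 5 (powR_ge0 _ _) (ltW x0) Hm2.
  rewrite -(powR_mulrn 5 (powR_ge0 y _)) -powRrM mulVf ?pnatr_eq0 // powRr1 //.
have lnK : ln K%:R <= mu / 48 * x ^+ 5.
  have -> : ln K%:R = mu / 48 * y by rewrite /y; field; lra.
  by apply: ler_wpM2l => //; rewrite divr_ge0 //; lra.
set a := (size (odd_range lam))%:R : R.
have ab : x <= 2 * a + 2.
  have := size_odd_range lam; rewrite -(ler_nat R) natrD natrM /x /a => H2; lra.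
set b := (size (even_range lam))%:R : R.
have bb : x ^+ 5 <= 2 * b + 1.
  have := size_even_range lam; rewrite -(ler_nat R) natrD natrM natrX /x /b => H2; lra.
set N := (\sum_(p <- odd_range lam | prime p)
        count (fun a => prime (a * p + 1) && (a * p + 1 %| K)%N) (even_range lam))%N.
have Nb : (N%:R : R) <= 6 * m%:R.
  by have := count_main l1 K0; rewrite -(ler_nat R) natrM.
set sq := Num.sqrt (Num.sqrt x).
have sq0 : 0 <= sq by apply: sqrtr_ge0.
have sq4 : sq ^+ 4 = x.
  by rewrite (_ : 4 = 2 * 2)%N // exprM !sqr_sqrtr // sqrtr_ge0.
have c14 : (2:R) ^+ 9 = 512 by rewrite !exprS expr0; lra.
have sq14 : 512 <= sq.
  have H : (512:R) ^+ 4 <= sq ^+ 4.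
    rewrite sq4 -c14 -exprM; apply: le_trans x58; by rewrite ler_eXn2l // ltr1n.
  move: H; rewrite ler_pXn2r // nnegrE //; lra.
have sqp : 0 < sq by lra.
have ls : l <= 4 * sq.
  have := ln_sublinear sqp; rewrite /l -sq4 lnXn // -mulr_natl; lra.
set X := x ^+ 5.
have X2 : 2 <= X.
  rewrite /X -sq4 -exprM; apply: le_trans (_ : sq <= _).
    lra.
  by rewrite -[X in X <= _]expr1 ler_eXn2l //; lra.
have Xs : X = x ^+ 5 by [].
set T := sq ^+ 3.
have sq4T : x = sq * T by rewrite -sq4 /T -exprS.
have T1 : 1 <= T by rewrite /T expr_ge1 //; lra.
have lT : l ^+ 3 <= 64 * T.
  have := lerXn2r 3 l0 (mulr_ge0 (ler0n _ 4) sq0) ls.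
  by rewrite exprMn /T (_ : (4:R) ^+ 3 = 64) //; rewrite !exprS expr0; lra.
have a0 : 0 < a.
  have : 512 * T <= x by rewrite sq4T ler_wpM2r //; lra.
  lra.
have b0 : 0 < b by lra.
apply: le_trans (alg_bound K lam eps) _.
change (n1%:R * (a^-1 * (n2%:R * (b^-1 * N%:R))) <= mu).
have -> : n1%:R * (a^-1 * (n2%:R * (b^-1 * N%:R))) = (n1%:R * n2%:R * N%:R) / (a * b).
  by rewrite invfM; ring.
rewrite ler_pdivrMr ?mulr_gt0 //.
have n10 : 0 <= (n1%:R : R) by [].
have n20 : 0 <= (n2%:R : R) by [].
have N0 : 0 <= (N%:R : R) by [].
have m0 : 0 <= (m%:R : R) by [].
have t1 : n1%:R * n2%:R * N%:R <= (5%:R / 6%:R * L * l) * (12%:R * L * l) * (6 * m%:R).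
  by apply: ler_pM; [rewrite mulr_ge0| | apply: ler_pM | ].
have t2 : L * L <= l * l / 4 by nra.
have P0 : 0 <= l * l * m%:R by rewrite !mulr_ge0.
have t3 : (5%:R / 6%:R * L * l) * (12%:R * L * l) * (6 * m%:R) <= 15 * (l ^+ 3) * (m%:R * l).
  have -> : (5%:R / 6%:R * L * l) * (12%:R * L * l) * (6 * m%:R) = 60 * (L * L) * (l * l * m%:R).
    by field.
  have -> : 15 * (l ^+ 3) * (m%:R * l) = 60 * (l * l / 4) * (l * l * m%:R).
    by rewrite !exprS expr0; field.
  by apply: ler_wpM2r => //; apply: ler_wpM2l => //; lra.
have l30 : 0 <= l ^+ 3 by rewrite exprn_ge0.
have t4 : 15 * (l ^+ 3) * (m%:R * l) <= 15 * (64 * T) * (mu / 48 * X).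
  apply: ler_pM; [|by rewrite mulr_ge0| |exact: le_trans mb lnK].
  - by rewrite mulr_ge0.
  - by apply: ler_wpM2l => //.
have t5 : 15 * (64 * T) * (mu / 48 * X) = mu * (20 * T * X) by field.
have t6 : 20 * T * X <= a * b.
  have hx : x <= 2 * a + 2 by [].
  have ha : 160 * T <= a.
    have : 512 * T <= x by rewrite sq4T ler_wpM2r //; lra.
    lra.
  have hb : X / 4 <= b by lra.
  have : 160 * T * (X / 4) <= a * b by apply: ler_pM => //; rewrite ?mulr_ge0 //; lra.
  have TX0 : 0 <= T * X by rewrite mulr_ge0 //; lra.
  have -> : 160 * T * (X / 4) = 40 * (T * X) by field.
  have -> : 20 * T * X = 20 * (T * X) by ring.
  lra.
apply: le_trans t1 _; apply: le_trans t3 _; apply: le_trans t4 _; rewrite t5.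
by apply: ler_wpM2l => //; lra.
Qed.
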